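(* Let $d \ge 0$ be an integer, let $V(K_n) = X \cup Y$ be a partition, and let $c : E(K_n) \to \{R,G,B\}$ be an almost Gallai colouring of $K_n$ such that $|N_G(y) \cap X| \le d$ for all $y \in Y$. Then \[ \tau^{G}_{\mathrm{rb}}(X,Y) \le \frac{e}{2}(d+1)\,|X| \log |X|. \]
   Context: A colouring of $E(K_n)$ is almost Gallai if no two rainbow triangles share an edge, where a triangle is rainbow if its three edges have pairwise distinct colours. $N_G(y)$ is the set of vertices joined to $y$ by a green edge. For disjoint $X, Y \subseteq V(K_n)$ and a colour $q$, $\tau^{q}_{\mathrm{rb}}(X,Y)$ is the number of rainbow triangles $y x_1 x_2$ with $y \in Y$, $x_1, x_2 \in X$ and $x_1x_2$ coloured $q$. Logarithms are in base 2. *)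

(* Defs.v *)
From mathcomp Require Import all_boot.
From Stdlib Require Import Reals.
Set Implicit Arguments. Unset Strict Implicit. Unset Printing Implicit Defensive.

Definition colour := 'I_3.
Definition Red : colour := @Ordinal 3 0 isT.
Definition Green : colour := @Ordinal 3 1 isT.
Definition Blue : colour := @Ordinal 3 2 isT.

(* An edge colouring of K_n: a symmetric function on pairs of vertices;
   only its values on pairs of distinct vertices matter. *)
Definition edge_colouring (n : nat) (c : 'I_n -> 'I_n -> colour) : Prop :=
  forall u v, c u v = c v u.

Definition rainbow (n : nat) (c : 'I_n -> 'I_n -> colour) (u v w : 'I_n) : bool :=
  [&& u != v, v != w, u != w,
      c u v != c v w, c u v != c u w & c v w != c u w].

(* Almost Gallai: no two (distinct) rainbow triangles share an edge. *)
Definition almost_gallai (n : nat) (c : 'I_n -> 'I_n -> colour) : Prop :=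
  forall u v w w' : 'I_n, rainbow c u v w -> rainbow c u v w' -> w = w'.

Definition NG (n : nat) (c : 'I_n -> 'I_n -> colour) (y : 'I_n) : {set 'I_n} :=
  [set x | (x != y) && (c y x == Green)].

(* tau^q_rb(X,Y): number of rainbow triangles y x1 x2 with y in Y, x1, x2 in X
   and x1x2 coloured q (unordered pair {x1,x2} counted once via x1 < x2). *)
Definition tau_rb (n : nat) (c : 'I_n -> 'I_n -> colour) (q : colour)
    (X Y : {set 'I_n}) : nat :=
  #|[set t : 'I_n * ('I_n * 'I_n) |
      [&& t.1 \in Y, t.2.1 \in X, t.2.2 \in X, (t.2.1 < t.2.2)%N,
          c t.2.1 t.2.2 == q & rainbow c t.1 t.2.1 t.2.2]]|.

Definition log2 (x : R) : R := (ln x / ln 2)%R.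

(* Main.v *)
Require Import Defs.
From mathcomp Require Import all_boot.
From Stdlib Require Import Reals Lra Psatz.
From mathcomp Require Import zify.

Lemma ln_le_sub1 (z : R) : (0 < z)%R -> (ln z <= z - 1)%R.
Proof.
move=> hz. case: (Req_dec (ln z) 0) => [h0|hne].
  have e1 : z = 1%R.
    rewrite -(exp_ln z hz) h0. exact: exp_0.
  rewrite h0; lra.
have := exp_ineq1 _ hne. rewrite exp_ln //. lra.
Qed.

Lemma ln2_bounds : (1/2 <= ln 2 <= 1)%R.
Proof.
split; last by have := ln_le_sub1 2; lra.
have := ln_le_sub1 (/2) ltac:(lra). rewrite ln_Rinv; lra.
Qed.

Lemma ln_ge0 (x : R) : (1 <= x)%R -> (0 <= ln x)%R.
Proof.
move=> h; case: (Req_dec x 1) => [->|hne]; first by rewrite ln_1; lra.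
left; rewrite -ln_1; apply: ln_increasing; lra.
Qed.

Lemma split_ineq (a b : R) : (0 < a)%R -> (a <= b)%R ->
  (a * ln a + b * ln b + 2 * a * ln 2 <= (a + b) * ln (a + b))%R.
Proof.
move=> ha hab.
set s := (a + b)%R.
have hs : (0 < s)%R by rewrite /s; lra.
have hb : (0 < b)%R by lra.
have key : forall x y, (0 < x)%R -> (0 < y)%R ->
   (s * (ln s - ln x - ln y) >= s - x * y)%R.
  move=> x y hx hy.
  have := ln_le_sub1 (x * y / s) ltac:(apply: Rdiv_lt_0_compat; [nra|lra]).
  rewrite /Rdiv ln_mult; [|nra|by apply: Rinv_0_lt_compat].
  rewrite ln_mult // ln_Rinv // => h.
  have e : (x * y * / s * s = x * y)%R by field; lra.
  nra.
have P1 := key a 2%R ha ltac:(lra).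
have P2 := key b 2%R hb ltac:(lra).
have P3 := key b 1%R hb ltac:(lra).
rewrite ln_1 in P3.
have [l1 l2] := ln2_bounds.
set la := ln a in P1 *. set lb := ln b in P2 P3 *. set ls := ln s in P1 P2 P3 *.
set l := ln 2 in P1 P2 l1 l2 *.
suff : (s * (a * (ls - la) + b * (ls - lb)) >= s * (2 * a * l))%R.
  move=> h.
  have : (a * (ls - la) + b * (ls - lb) >= 2 * a * l)%R.
    apply: Rle_ge; apply: (Rmult_le_reg_l s) => //; exact: Rge_le.
  rewrite /s in h *; nra.
have es : s = (a + b)%R by [].
case: (Rle_dec (2 * a) b) => hc.
-
  have h1 : (s * (a * (ls - la)) >= a * (s * l + s - 2 * a))%R.
    have := Rmult_ge_compat_l a _ _ ltac:(lra) P1. lra.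
  have h3 : (s * (b * (ls - lb)) >= b * (s - b))%R.
    have := Rmult_ge_compat_l b _ _ ltac:(lra) P3. lra.
  have : (a * (s * l + s - 2 * a) + b * (s - b) >= s * (2 * a * l))%R.
    have q1 : (0 <= a * s * (1 - l))%R by apply: Rmult_le_pos; nra.
    have q2 : (0 <= a * (b - 2 * a))%R by nra.
    rewrite es in q1 *. nra.
  lra.
- have h1 : (s * (a * (ls - la)) >= a * (s * l + s - 2 * a))%R.
    have := Rmult_ge_compat_l a _ _ ltac:(lra) P1. lra.
  have h2 : (s * (b * (ls - lb)) >= b * (s * l + s - 2 * b))%R.
    have := Rmult_ge_compat_l b _ _ ltac:(lra) P2. lra.
  have : (a * (s * l + s - 2 * a) + b * (s * l + s - 2 * b) >= s * (2 * a * l))%R.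
    have q1 : (0 <= (b - a) * ((a + b) * l - (b - a)))%R.
      apply: Rmult_le_pos; nra.
    rewrite es. nra.
  lra.
Qed.

Lemma ln_le_inv (x y : R) : (0 < x)%R -> (0 < y)%R -> (ln x <= ln y)%R -> (x <= y)%R.
Proof.
move=> hx hy h; case: (Rle_lt_dec x y) => // hlt.
have := ln_increasing _ _ hy hlt; lra.
Qed.

Lemma e_bound (d : nat) : (INR ((d.+1) ^ d) <= exp 1 * INR (d ^ d))%R.
Proof.
case: d => [|d].
  rewrite /= Rmult_1_r; have := exp_ineq1 1 ltac:(lra); lra.
rewrite !pow_INR.
set D := INR d.+1.
have hD : (0 < D)%R by apply: lt_0_INR; apply/ltP.
have eS : INR d.+2 = (D + 1)%R by rewrite /D S_INR.
rewrite eS.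
apply: ln_le_inv.
- apply: pow_lt; lra.
- apply: Rmult_lt_0_compat; [exact: exp_pos| apply: pow_lt; lra].
rewrite ln_mult; [|exact: exp_pos| apply: pow_lt; lra].
rewrite ln_exp !ln_pow; try lra.
have := ln_le_sub1 ((D + 1) / D) ltac:(apply: Rdiv_lt_0_compat; lra).
rewrite /Rdiv ln_mult; [|lra|by apply: Rinv_0_lt_compat].
rewrite ln_Rinv // => h.
have e1 : ((D + 1) * / D - 1 = / D)%R by field; lra.
rewrite e1 in h.
have e2 : (D * / D = 1)%R by field; lra.
have : (D * (ln (D + 1) - ln D) <= D * / D)%R by apply: Rmult_le_compat_l; lra.
move=> hh; rewrite Rmult_minus_distr_l e2 in hh; rewrite -/D; lra.
Qed.

Lemma split_nat (a b m : nat) : (0 < a)%N -> (0 < b)%N -> (m <= a)%N -> (m <= b)%N ->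
  (INR a * ln (INR a) + INR b * ln (INR b) + INR m * (2 * ln 2)
     <= INR (a + b) * ln (INR (a + b)))%R.
Proof.
move=> ha hb hma hmb.
have [l1 l2] := ln2_bounds.
rewrite plus_INR.
have ha' : (0 < INR a)%R by apply: lt_0_INR; apply/ltP.
have hb' : (0 < INR b)%R by apply: lt_0_INR; apply/ltP.
case: (leqP a b) => hab.
- have := split_ineq _ _ ha' (le_INR _ _ (elimT leP hab)).
  have := le_INR _ _ (elimT leP hma) => hm.
  have : (0 <= (INR a - INR m) * ln 2)%R by apply: Rmult_le_pos; lra.
  lra.
- have := split_ineq _ _ hb' (le_INR _ _ (elimT leP (ltnW hab))).
  have := le_INR _ _ (elimT leP hmb) => hm.
  have : (0 <= (INR b - INR m) * ln 2)%R by apply: Rmult_le_pos; lra.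
  rewrite (Rplus_comm (INR a)). lra.
Qed.

Lemma cardU_le (T : finType) (A B : {set T}) : (#|A :|: B| <= #|A| + #|B|)%N.
Proof. by rewrite -cardsUI leq_addr. Qed.

Lemma nlogn_ge0 (k : nat) : (0 <= INR k * ln (INR k))%R.
Proof.
case: k => [|k]; first by rewrite /= Rmult_0_l; lra.
apply: Rmult_le_pos; first exact: pos_INR.
apply: ln_ge0. rewrite S_INR; have := pos_INR k; lra.
Qed.

Section Core.
Variables (V L : finType) (Lset : {set L}) (f : L -> V -> bool).

Definition H1 (Z : {set V}) (E : {set L * (V * V)}) :=
  forall t, t \in E -> [&& t.2.1 \in Z, t.2.2 \in Z, t.1 \in Lset & f t.1 t.2.1 != f t.1 t.2.2].
Definition H2 (E : {set L * (V * V)}) :=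
  forall t y', t \in E -> y' \in Lset -> y' != t.1 -> f y' t.2.1 = f y' t.2.2.
Definition H3 (E : {set L * (V * V)}) :=
  forall t t', t \in E -> t' \in E -> t.1 = t'.1 ->
    [|| t.2.1 == t'.2.1, t.2.1 == t'.2.2, t.2.2 == t'.2.1 | t.2.2 == t'.2.2] -> t = t'.

Lemma H2_sub (E E' : {set L * (V * V)}) : H2 E -> E' \subset E -> H2 E'.
Proof. move=> h s t y' tE; apply: h; exact: (subsetP s). Qed.
Lemma H3_sub (E E' : {set L * (V * V)}) : H3 E -> E' \subset E -> H3 E'.
Proof. move=> h s t t' tE t'E; apply: h; exact: (subsetP s). Qed.

Lemma core k : forall (Z : {set V}) (E : {set L * (V * V)}), (#|Z| <= k)%N ->
  H1 Z E -> H2 E -> H3 E ->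
  (INR #|E| * (2 * ln 2) <= INR #|Z| * ln (INR #|Z|))%R.
Proof.
have [l1 l2] := ln2_bounds.
elim: k => [|k IH] Z E hk h1 h2 h3.
  have -> : E = set0.
    apply/setP => t; rewrite inE; apply/negP => /h1 /and4P [hz _ _ _].
    move: hk; rewrite leqn0 => /eqP /cards0_eq hZ; by rewrite hZ inE in hz.
  rewrite cards0 /= Rmult_0_l; exact: nlogn_ge0.
have [E0|/set0Pn [t tE]] := eqVneq E set0.
  rewrite E0 cards0 /= Rmult_0_l; exact: nlogn_ge0.
set y := t.1.
have /and4P [t1Z t2Z yL fne] := h1 t tE.
set P := [set x | f y x].
set A := Z :&: P. set B := Z :\: P.
set Ey := [set u in E | u.1 == y].
set EA := [set u in E | (u.1 != y) && f y u.2.1].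
set EB := [set u in E | (u.1 != y) && ~~ f y u.2.1].
have cover : (#|E| <= #|Ey| + (#|EA| + #|EB|))%N.
  apply: (@leq_trans #|Ey :|: (EA :|: EB)|).
    apply: subset_leq_card; apply/subsetP => u uE; rewrite !inE uE /=.
    by case: (u.1 == y); case: (f y u.2.1).
  apply: leq_trans; first exact: cardU_le. rewrite leq_add2l; exact: cardU_le.
have EyE : forall u, u \in Ey -> (u \in E) && (u.1 == y).
  by move=> u; rewrite inE.
have share : {in Ey &, forall u u', [|| u.2.1 == u'.2.1, u.2.1 == u'.2.2,
    u.2.2 == u'.2.1 | u.2.2 == u'.2.2] -> u = u'}.
  move=> u u' /EyE /andP [uE /eqP uy] /EyE /andP [u'E /eqP u'y] hs.
  apply: h3 => //; by rewrite uy u'y.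
have fneu : forall u, u \in Ey -> f y u.2.1 != f y u.2.2.
  move=> u /EyE /andP [uE /eqP uy]; have /and4P [_ _ _] := h1 u uE; by rewrite uy.
have inZu : forall u, u \in Ey -> (u.2.1 \in Z) && (u.2.2 \in Z).
  move=> u /EyE /andP [uE _]; by have /and4P [-> -> _ _] := h1 u uE.
have EyA : (#|Ey| <= #|A|)%N.
  pose g (u : L * (V * V)) := if f y u.2.1 then u.2.1 else u.2.2.
  rewrite -(card_in_imset (f := g)).
    apply: subset_leq_card; apply/subsetP => x /imsetP [u uEy ->].
    have := fneu u uEy; have /andP [z1 z2] := inZu u uEy.
    rewrite /g !inE; case hf: (f y u.2.1) => /=; case hg: (f y u.2.2) => //= _; by rewrite ?z1 ?z2 ?hf ?hg.
  move=> u u' uEy u'Ey; rewrite /g => hg; apply: share => //.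
  by case: (f y u.2.1) hg; case: (f y u'.2.1) => ->; rewrite eqxx ?orbT.
have EyB : (#|Ey| <= #|B|)%N.
  pose g (u : L * (V * V)) := if f y u.2.1 then u.2.2 else u.2.1.
  rewrite -(card_in_imset (f := g)).
    apply: subset_leq_card; apply/subsetP => x /imsetP [u uEy ->].
    have := fneu u uEy; have /andP [z1 z2] := inZu u uEy.
    rewrite /g !inE; case hf: (f y u.2.1) => /=; case hg: (f y u.2.2) => //= _; by rewrite ?z1 ?z2 ?hf ?hg.
  move=> u u' uEy u'Ey; rewrite /g => hg; apply: share => //.
  by case: (f y u.2.1) hg; case: (f y u'.2.1) => ->; rewrite eqxx ?orbT.
have cardZ : #|Z| = (#|A| + #|B|)%N by rewrite cardsID.
have tEy : t \in Ey by rewrite inE tE eqxx.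
have Ey0 : (0 < #|Ey|)%N by apply/card_gt0P; exists t.
have hA : (#|A| <= k)%N.
  by move: hk; rewrite cardZ => hk; have := leq_trans Ey0 EyB; lia.
have hB : (#|B| <= k)%N.
  by move: hk; rewrite cardZ => hk; have := leq_trans Ey0 EyA; lia.
have sA : EA \subset E by apply/subsetP => u; rewrite inE => /andP [].
have sB : EB \subset E by apply/subsetP => u; rewrite inE => /andP [].
have IHA := IH A EA hA.
have IHB := IH B EB hB.
have {IHA} IHA : (INR #|EA| * (2 * ln 2) <= INR #|A| * ln (INR #|A|))%R.
  apply: IHA; [|exact: H2_sub sA|exact: H3_sub sA].
  move=> u; rewrite inE => /andP [uE /andP [uy fu]].
  have /and4P [z1 z2 uL fn] := h1 u uE.
  have e := h2 u y uE yL ltac:(by rewrite eq_sym).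
  by rewrite !inE z1 z2 uL fn -e fu.
have {IHB} IHB : (INR #|EB| * (2 * ln 2) <= INR #|B| * ln (INR #|B|))%R.
  apply: IHB; [|exact: H2_sub sB|exact: H3_sub sB].
  move=> u; rewrite inE => /andP [uE /andP [uy fu]].
  have /and4P [z1 z2 uL fn] := h1 u uE.
  have e := h2 u y uE yL ltac:(by rewrite eq_sym).
  by rewrite !inE z1 z2 uL fn -e fu.
have hsplit := @split_nat #|A| #|B| #|Ey| (leq_trans Ey0 EyA) (leq_trans Ey0 EyB) EyA EyB.
have cv := le_INR _ _ (elimT leP cover).
rewrite !plus_INR in cv.
have l0 : (0 <= 2 * ln 2)%R by lra.
have := Rmult_le_compat_r _ _ _ l0 cv.
rewrite cardZ. nra.
Qed.
End Core.

Lemma sumlemma (I : finType) (a b : I -> nat) (K r : R) :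
  (forall i, INR (a i) * K <= INR (b i) * r)%R ->
  (INR (\sum_i a i) * K <= INR (\sum_i b i) * r)%R.
Proof.
move=> H; elim/big_rec2: _ => [|i y1 y2 _ IH]; first by rewrite /= !Rmult_0_l; lra.
rewrite !plus_INR; have := H i; nra.
Qed.

Lemma expn_le_base m k r : (m <= k)%N -> (expn m r <= expn k r)%N.
Proof. move=> h; elim: r => [|r IH]; rewrite ?expn0 // !expnS; exact: leq_mul. Qed.

Lemma arith1 (d p q : nat) : (p <= d)%N ->
  (expn d.+1 (p + q + 2) * expn d d <= expn d.+1 d.+2 * (expn d p * expn d.+1 q))%N.
Proof.
move=> hp; rewrite -(subnKC hp); set r := (d - p)%N.
have hr : (expn d r <= expn d.+1 r)%N by apply: expn_le_base.
rewrite -(subnKC hp) -/r in hr.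
set D := (p + r)%N in hr *.
rewrite !expnD.
have e1 : (expn D.+1 D.+2 = expn D.+1 p * expn D.+1 r * expn D.+1 2)%N.
  by rewrite -!expnD; congr expn; rewrite /D; lia.
rewrite e1.
rewrite [X in (X <= _)%N](_ : _ = (expn D.+1 p * expn D.+1 q * expn D.+1 2 * expn D p) * expn D r)%N; last by lia.
rewrite [X in (_ <= X)%N](_ : _ = (expn D.+1 p * expn D.+1 q * expn D.+1 2 * expn D p) * expn D.+1 r)%N; last by lia.
by rewrite leq_mul2l hr orbT.
Qed.

Section Rb.
Variables (n : nat) (c : 'I_n -> 'I_n -> colour).
Hypothesis hs : edge_colouring c.

Lemma rb_12 u v w : rainbow c u v w -> rainbow c v u w.
Proof.
case/and5P => a b e g /andP [h k]; apply/and5P; rewrite ?(hs v u); split; try apply/andP; try split; by rewrite // eq_sym.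
Qed.
Lemma rb_23 u v w : rainbow c u v w -> rainbow c u w v.
Proof.
case/and5P => a b e g /andP [h k]; apply/and5P; rewrite ?(hs w v); split; try apply/andP; try split; by rewrite // eq_sym.
Qed.
End Rb.

Lemma col3 (a b : colour) : a != Green -> b != Green -> a != b -> (a == Red) != (b == Red).
Proof.
by case: a => [[|[|[|?]]] ?]; case: b => [[|[|[|?]]] ?].
Qed.

Section Main.
Variables (n d : nat) (X Y : {set 'I_n}) (c : 'I_n -> 'I_n -> colour).
Hypotheses (hXY : X :&: Y = set0) (hs : edge_colouring c) (hag : almost_gallai c).

Definition T := [set t : 'I_n * ('I_n * 'I_n) |
      [&& t.1 \in Y, t.2.1 \in X, t.2.2 \in X, (t.2.1 < t.2.2)%N,
          c t.2.1 t.2.2 == Green & rainbow c t.1 t.2.1 t.2.2]].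

Definition clean (h : {ffun 'I_n -> 'I_d.+1}) (i : 'I_d.+1) (y : 'I_n) :=
  [forall x in X, (c y x == Green) ==> (h x != i)].
Definition good (h : {ffun 'I_n -> 'I_d.+1}) (i : 'I_d.+1) (t : 'I_n * ('I_n * 'I_n)) :=
  [&& h t.2.1 == i, h t.2.2 == i & clean h i t.1].
Definition Eh (h : {ffun 'I_n -> 'I_d.+1}) (i : 'I_d.+1) := [set t in T | good h i t].
Definition Zh (h : {ffun 'I_n -> 'I_d.+1}) (i : 'I_d.+1) := [set x in X | h x == i].
Definition Lh (h : {ffun 'I_n -> 'I_d.+1}) (i : 'I_d.+1) := [set y in Y | clean h i y].
Definition fR (y x : 'I_n) := c y x == Red.

Lemma XYneq x y : x \in X -> y \in Y -> x != y.
Proof.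
move=> hx hy; apply/eqP => exy; move: hx; rewrite exy => hx.
have : y \in X :&: Y by rewrite inE hx hy.
by rewrite hXY inE.
Qed.

Lemma TP t : t \in T -> [&& t.1 \in Y, t.2.1 \in X, t.2.2 \in X, (t.2.1 < t.2.2)%N,
          c t.2.1 t.2.2 == Green & rainbow c t.1 t.2.1 t.2.2].
Proof. by rewrite inE. Qed.

Lemma step1 h i : (INR #|Eh h i| * (2 * ln 2) <= INR #|Zh h i| * ln (INR #|Zh h i|))%R.
Proof.
apply: (@core _ _ (Lh h i) fR #|Zh h i| (Zh h i) (Eh h i) (leqnn _)).
- move=> [y [a b]]; rewrite inE => /andP [/TP /and4P [yY aX bX /andP [ab /andP [g rb]]]].
  case/and3P => ha hb cl /=.
  rewrite !inE aX bX ha hb yY cl /=.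
  move: (rb) => /and5P [_ _ _ e1 /andP [e2 e3]].
  apply: col3 => //; first by rewrite -(eqP g).
  by rewrite -(eqP g) eq_sym.
- move=> [y [a b]] y'; rewrite inE => /andP [/TP /and4P [yY aX bX /andP [ab /andP [g rb]]]].
  case/and3P => ha hb cl /=.
  rewrite inE => /andP [y'Y cl'] ny.
  have ga : c y' a != Green.
    apply/negP => ga; move/forall_inP: cl' => /(_ a aX); by rewrite ga ha.
  have gb : c y' b != Green.
    apply/negP => gb; move/forall_inP: cl' => /(_ b bX); by rewrite gb hb.
  rewrite /fR; case: (eqVneq (c y' a) (c y' b)) => [-> //| hne]; exfalso.
  have r1 : rainbow c a b y by apply: rb_23 => //; apply: rb_12.
  have r2 : rainbow c a b y'.
    apply/and5P; split.
    + by rewrite neq_ltn ab.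
    + by rewrite XYneq.
    + by rewrite XYneq.
    + by rewrite (eqP g) hs eq_sym.
    + rewrite (eqP g) (hs a y') (hs b y'); apply/andP; split; by rewrite eq_sym.
  by move: ny; rewrite (hag _ _ _ _ r1 r2) eqxx.
- move=> [y [a b]] [y' [a' b']]; rewrite inE => /andP [/TP /and4P [yY aX bX /andP [ab /andP [g rb]]] _].
  rewrite inE => /andP [/TP /and4P [y'Y a'X b'X /andP [ab' /andP [g' rb']]] _] eyy.
  cbn [fst snd] in *. subst y'.
  case/or4P => /eqP e.
  + subst a'; by rewrite (hag _ _ _ _ rb rb').
  + subst b'. have := hag _ _ _ _ rb (@rb_23 _ _ hs _ _ _ rb') => e2; subst a'.
    by have := ltn_trans ab ab'; rewrite ltnn.
  + subst a'. have := hag _ _ _ _ (@rb_23 _ _ hs _ _ _ rb) rb' => e2; subst b'.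
    by have := ltn_trans ab ab'; rewrite ltnn.
  + subst b'. by rewrite (hag _ _ _ _ (@rb_23 _ _ hs _ _ _ rb) (@rb_23 _ _ hs _ _ _ rb')).
Qed.

Lemma card_sep (A : {set 'I_n}) (p : pred 'I_n) :
  #|[set x in A | p x]| = (\sum_(x in A) p x)%N.
Proof.
rewrite -sum1_card big_mkcond [RHS]big_mkcond /=; apply: eq_bigr => x _.
by rewrite !inE; case: (x \in A); case: (p x).
Qed.

Lemma sumZ h : (\sum_i #|Zh h i| = #|X|)%N.
Proof.
rewrite /Zh; under eq_bigr => i _ do rewrite card_sep.
rewrite exchange_big /= -sum1_card; apply: eq_bigr => x _.
rewrite (eq_bigr (fun i => (i == h x : nat))); last by move=> i _; rewrite eq_sym.
by rewrite -big_mkcond /= big_pred1_eq.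
Qed.

Lemma nlogn_mono k N : (k <= N)%N -> (INR k * ln (INR k) <= INR k * ln (INR N))%R.
Proof.
case: k => [|k] h; first by rewrite /= !Rmult_0_l; lra.
apply: Rmult_le_compat_l; first exact: pos_INR.
have hk : (0 < INR k.+1)%R by apply: lt_0_INR; apply/ltP.
case: (ltngtP k.+1 N) => hN.
- left; apply: ln_increasing => //; apply: lt_INR; exact/ltP.
- by move: h; rewrite leqNgt hN.
- rewrite hN; lra.
Qed.

Lemma step2 h : (INR (\sum_i #|Eh h i|) * (2 * ln 2) <= INR #|X| * ln (INR #|X|))%R.
Proof.
rewrite -{1}(sumZ h); apply: sumlemma => i.
apply: Rle_trans (step1 h i) _; apply: nlogn_mono.
apply: subset_leq_card; apply/subsetP => x; by rewrite inE => /andP [].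
Qed.

Lemma step3 : (INR (\sum_h \sum_i #|Eh h i|) * (2 * ln 2) <=
    INR (expn d.+1 n * #|X|) * ln (INR #|X|))%R.
Proof.
have -> : (expn d.+1 n * #|X| = \sum_(h : {ffun 'I_n -> 'I_d.+1}) #|X|)%N.
  have e : #|{ffun 'I_n -> 'I_d.+1}| = expn d.+1 n by rewrite card_ffun !card_ord.
  rewrite sum_nat_const -e; congr (_ * _); exact: eq_card.
apply: sumlemma => h; exact: step2.
Qed.

Lemma count_t t i : t \in T -> (#|NG c t.1 :&: X| <= d)%N ->
  (expn d.+1 n * expn d d <= expn d.+1 d.+2 * #|[set h | good h i t]|)%N.
Proof.
case: t => y [a b] /TP /and4P [yY aX bX /andP [ab /andP [g rb]]] hd.
cbn [fst snd] in *.
have [ga gb] : (c y a != Green) /\ (c y b != Green).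
  move: (rb) => /and5P [_ _ _ e1 /andP [e2 e3]].
  by rewrite -(eqP g) e1 eq_sym e3.
set S2 := [set a; b].
set Gs := [set x in X | c y x == Green].
pose F (x : 'I_n) : pred 'I_d.+1 :=
  fun j => if x \in S2 then j == i else if x \in Gs then j != i else true.
have cF : #|[set h | good h i (y, (a, b))]| = #|finfun.family F|.
  apply: eq_card => h; rewrite inE; apply/idP/familyP.
  - case/and3P => ha hb /forall_inP cl x; rewrite /F !inE.
    case: (eqVneq x a) => [-> //|xa]; case: (eqVneq x b) => [-> //|xb] /=.
    case xX: (x \in X) => //=; case xg: (c y x == Green) => //=.
    exact: (implyP (cl x xX)).
  - move=> hF; apply/and3P; split.
    + by have := hF a; rewrite /F !inE eqxx.
    + by have := hF b; rewrite /F !inE eqxx orbT.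
    + apply/forall_inP => x xX; apply/implyP => xg.
      have := hF x; rewrite /F !inE xX xg /=.
      case: (eqVneq x a) => [ea|xa]; first by move: xg; rewrite ea (negbTE ga).
      case: (eqVneq x b) => [eb|xb]; first by move: xg; rewrite eb (negbTE gb).
      done.
rewrite cF card_family foldrE big_image /=.
have wF : forall x, #|F x| = if x \in S2 then 1%N else if x \in Gs then d else d.+1.
  move=> x; rewrite /F; case: (x \in S2) => /=.
    by rewrite -(card1 i); apply: eq_card => j; rewrite !inE.
  case: (x \in Gs) => /=.
    transitivity #|predC1 i|; first by apply: eq_card => j; rewrite !inE.
    by rewrite cardC1 card_ord.
  transitivity #|'I_d.+1|; last by rewrite card_ord.
  by apply: eq_card => j; rewrite !inE.
rewrite (eq_bigr _ (fun x _ => wF x)).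
rewrite (bigID (fun x => x \in S2)) /=.
rewrite big1 ?mul1n; last by move=> x ->.
rewrite (bigID (fun x => x \in Gs)) /=.
rewrite (eq_bigr (fun _ => d)); last by move=> x /andP [/negbTE -> ->].
rewrite [\prod_(i0 < n | (i0 \notin S2) && (i0 \notin Gs)) _](eq_bigr (fun _ => d.+1)); last by move=> x /andP [/negbTE -> /negbTE ->].
rewrite [\prod_(i0 < n | (i0 \notin S2) && (i0 \in Gs)) _](eq_bigl (fun j => j \in ~: S2 :&: Gs)); last by move=> j; rewrite !inE.
rewrite [\prod_(i0 < n | (i0 \notin S2) && (i0 \notin Gs)) _](eq_bigl (fun j => j \in ~: S2 :\: Gs)); last by move=> j; rewrite !inE andbC.
rewrite !prod_nat_const.
have en : n = (#|~: S2 :&: Gs| + #|~: S2 :\: Gs| + 2)%N.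
  rewrite cardsID.
  have h := cardsC S2; rewrite card_ord /S2 cards2 in h.
  have ab2 : (a != b) by rewrite neq_ltn ab.
  rewrite ab2 /S2 in h *; lia.
rewrite {1}en; apply: arith1.
apply: leq_trans hd.
apply: leq_trans (subset_leq_card (subsetIr _ _)) _.
apply: subset_leq_card; apply/subsetP => x; rewrite !inE => /andP [xX xg].
by rewrite xX xg (XYneq _ _ xX yY).
Qed.

Lemma card_sepT (T0 : finType) (A : {set T0}) (p : pred T0) :
  #|[set x in A | p x]| = (\sum_(x in A) p x)%N.
Proof.
rewrite -sum1_card big_mkcond [RHS]big_mkcond /=; apply: eq_bigr => x _.
by rewrite !inE; case: (x \in A); case: (p x).
Qed.

Lemma step5 : (forall y, y \in Y -> (#|NG c y :&: X| <= d)%N) ->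
  (#|T| * (expn d.+1 n * expn d d) <= expn d.+1 d.+1 * \sum_h \sum_i #|Eh h i|)%N.
Proof.
move=> hd.
have eS : (\sum_h \sum_i #|Eh h i| =
    \sum_(t in T) \sum_i #|[set h | good h i t]|)%N.
  under eq_bigr => h _ do under eq_bigr => i _ do rewrite /Eh card_sepT.
  under eq_bigr => h _ do rewrite exchange_big /=.
  rewrite exchange_big /=; apply: eq_bigr => t tT.
  rewrite exchange_big /=; apply: eq_bigr => i _.
  have := @card_sepT _ [set: {ffun 'I_n -> 'I_d.+1}] (fun h => good h i t).
  have -> : [set x in [set: {ffun 'I_n -> 'I_d.+1}] | good x i t] = [set h | good h i t].
    by apply/setP => h; rewrite !inE.
  move=> ->; apply: eq_bigl => h; by rewrite inE.
rewrite eS big_distrr /= -sum_nat_const; apply: leq_sum => t tT.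
have hdt : (#|NG c t.1 :&: X| <= d)%N by apply: hd; case/TP/andP: tT.
rewrite -(@leq_pmul2l d.+1) // [X in (_ <= X)%N]mulnA -expnS big_distrr /=.
have -> : (d.+1 * (expn d.+1 n * expn d d) =
   \sum_(i < d.+1) (expn d.+1 n * expn d d))%N by rewrite sum_nat_const card_ord.
apply: leq_sum => i _; exact: count_t.
Qed.
End Main.

Lemma expn_INR a b : INR (expn a b) = (INR a ^ b)%R.
Proof. elim: b => [|b IH]; first by rewrite expn0. by rewrite expnS mult_INR IH. Qed.

Theorem lemma5p2 (n d : nat) (X Y : {set 'I_n})
  (c : 'I_n -> 'I_n -> colour) :
  X :&: Y = set0 -> X :|: Y = [set: 'I_n] ->
  edge_colouring c -> almost_gallai c ->
  (forall y, y \in Y -> (#|NG c y :&: X| <= d)%N) ->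
  Rle (INR (tau_rb c Green X Y))
      (Rmult (Rmult (Rmult (Rdiv (exp 1) 2) (INR d.+1)) (INR #|X|))
             (log2 (INR #|X|))).
Proof.
move=> hXY _ hs hag hd.
have -> : tau_rb c Green X Y = #|T n X Y c| by [].
have h5 := @step5 n d X Y c hXY hd.
have h3 := @step3 n d X Y c hXY hs hag.
set S := (\sum_h \sum_i #|Eh n d X Y c h i|)%N in h5 h3.
have h5r := le_INR _ _ (elimT leP h5).
rewrite !mult_INR !expn_INR in h5r.
rewrite mult_INR expn_INR in h3.
have eb := e_bound d; rewrite !pow_INR in eb.
have [l1 l2] := ln2_bounds.
have NL := nlogn_ge0 #|X|.
set tT := INR #|T n X Y c| in h5r *.
set Sr := INR S in h5r h3.
set Nr := INR #|X| in h3 NL *.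
set Ln := ln Nr in h3 NL *.
set P := (INR d.+1 ^ n)%R in h5r h3.
set Q := (INR d ^ d)%R in h5r eb.
set D := INR d.+1 in h5r eb *.
have hP : (0 < P)%R by apply: pow_lt; rewrite /D; apply: lt_0_INR; apply/ltP.
have hQ : (0 < Q)%R by rewrite /Q; case: (d) => [|d']; [rewrite /=; lra| apply: pow_lt; apply: lt_0_INR; apply/ltP].
have hD : (0 < D)%R by apply: lt_0_INR; apply/ltP.
have he : (0 < exp 1)%R by apply: exp_pos.
have eD : (D ^ d.+1 = D * D ^ d)%R by [].
rewrite eD in h5r.
have tT0 : (0 <= tT)%R by apply: pos_INR.
have s1 : (tT * (P * Q) * (2 * ln 2) <= D * D ^ d * P * (Nr * Ln))%R.
  have l0 : (0 <= 2 * ln 2)%R by lra.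
  have a1 := Rmult_le_compat_r _ _ _ l0 h5r.
  have : (0 <= D * D ^ d)%R by apply: Rmult_le_pos; [lra| apply: pow_le; lra].
  move=> hDD.
  have a2 := Rmult_le_compat_l _ _ _ hDD h3.
  nra.
have s2 : (tT * Q * (2 * ln 2) <= D * D ^ d * (Nr * Ln))%R.
  apply: (Rmult_le_reg_l P) => //. nra.
have s3 : (tT * Q * (2 * ln 2) <= D * (exp 1 * Q) * (Nr * Ln))%R.
  eapply Rle_trans; first exact: s2. apply: Rmult_le_compat_r => //. apply: Rmult_le_compat_l; lra.
have s4 : (tT * (2 * ln 2) <= D * exp 1 * (Nr * Ln))%R.
  apply: (Rmult_le_reg_l Q) => //. nra.
rewrite /log2 /Rdiv.
have hl : (0 < ln 2)%R by lra.
apply: (Rmult_le_reg_l (2 * ln 2)); first lra.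
have e2 : (2 * ln 2 * (exp 1 * / 2 * D * Nr * (Ln * / ln 2)) = D * exp 1 * (Nr * Ln))%R.
  field; lra.
rewrite e2; lra.
Qed.
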